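(* Let $U>0$, $T\ge0$, $\mu\ge0$, and let $(\gamma,\alpha,\rho_0)$ be a minimizer of $\mathcal{F}$ over $\mathcal{D}$. If $\rho_0=0$ then $\|\gamma\|_{L^1}\ge \mu/(2U)$; if $\rho_0>0$ then $\|\gamma\|_{L^1}\le\mu/(2U)$. Furthermore, if $\mu\le0$, no minimizer has $\rho_0>0$.
   Context: Let $\mathbb{T}^3=[-\pi,\pi]^3$ with periodic identification and normalized Haar measure $dp$. Let $\varepsilon(p)=4\sum_{k=1}^3\sin^2(p_k/2)$. $\mathcal{D}=\{(\gamma,\alpha,\rho_0): \gamma\in L^1(\mathbb{T}^3),\ \gamma\ge0,\ \alpha^2\le\gamma(1+\gamma)\text{ a.e.},\ \rho_0\ge0\}$. With $\beta=\sqrt{(\tfrac12+\gamma)^2-\alpha^2}$, $S(\gamma,\alpha)=\int\big[(\beta+\tfrac12)\ln(\beta+\tfrac12)-(\beta-\tfrac12)\ln(\beta-\tfrac12)\big]dp$, and $\mathcal{F}(\gamma,\alpha,\rho_0)=\int(\varepsilon-\mu)\gamma\,dp-\mu\rho_0-TS(\gamma,\alpha)+\frac U2(\int\alpha)^2+U(\int\gamma)^2+U\rho_0\int\alpha+2U\rho_0\int\gamma+\frac U2\rho_0^2$ (integrals over $\mathbb{T}^3$; entropy term absent at $T=0$). A minimizer is a point of $\mathcal{D}$ attaining $\inf_{\mathcal{D}}\mathcal{F}$. *)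

(* Defs.v *)
From mathcomp Require Import all_boot all_order all_algebra.
From mathcomp Require Import all_classical all_reals all_analysis.
Set Implicit Arguments. Unset Strict Implicit. Unset Printing Implicit Defensive.
Import Order.TTheory GRing.Theory Num.Theory.
Import numFieldNormedType.Exports.
Local Open Scope classical_set_scope.
Local Open Scope ring_scope.

Section BogoliubovDefs.
Context {R : realType}.

Definition pt := ((R * R) * R)%type.

Definition leb3 := ((@lebesgue_measure R \x @lebesgue_measure R) \x @lebesgue_measure R)%E.

(* the torus T^3 = [-pi,pi]^3 (the periodic identification is irrelevant for integrals) *)
Definition torus : set pt :=
  [set p | p.1.1 \in `[- pi, pi] /\ p.1.2 \in `[- pi, pi] /\ p.2 \in `[- pi, pi]].

(* integral w.r.t. the normalized Haar measure dp = dp / (2 pi)^3 *)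
Definition tint (f : pt -> R) : R := ((2 * pi) ^+ 3)^-1 * Rintegral leb3 torus f.

Definition L1norm (f : pt -> R) : R := tint (fun p => `|f p|).

Definition disp (p : pt) : R :=
  4 * (sin (p.1.1 / 2) ^+ 2 + sin (p.1.2 / 2) ^+ 2 + sin (p.2 / 2) ^+ 2).

Definition ae_torus (P : pt -> Prop) : Prop :=
  leb3.-negligible [set p | torus p /\ ~ P p].

Definition domD (g a : pt -> R) (rho : R) : Prop :=
  [/\ measurable_fun torus g /\ leb3.-integrable torus (EFin \o g),
      measurable_fun torus a,
      ae_torus (fun p => 0 <= g p),
      ae_torus (fun p => a p ^+ 2 <= g p * (1 + g p)) & 0 <= rho].

Definition betaf (g a : pt -> R) (p : pt) : R :=
  Num.sqrt ((2^-1 + g p) ^+ 2 - a p ^+ 2).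

(* entropy S(gamma, alpha); note ln 0 = 0 in mathcomp, so 0 * ln 0 = 0 *)
Definition entropy (g a : pt -> R) : R :=
  tint (fun p => let b := betaf g a p in
         (b + 2^-1) * ln (b + 2^-1) - (b - 2^-1) * ln (b - 2^-1)).

Definition freeF (U T mu : R) (g a : pt -> R) (rho : R) : R :=
  tint (fun p => (disp p - mu) * g p) - mu * rho - T * entropy g a
  + U / 2 * (tint a) ^+ 2 + U * (tint g) ^+ 2 + U * rho * tint a
  + 2 * U * rho * tint g + U / 2 * rho ^+ 2.

Definition minimizer (U T mu : R) (g a : pt -> R) (rho : R) : Prop :=
  domD g a rho /\
  forall g' a' rho', domD g' a' rho' -> freeF U T mu g a rho <= freeF U T mu g' a' rho'.

End BogoliubovDefs.

(* Main.v *)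
Require Import Defs.
From mathcomp Require Import all_boot all_order all_algebra.
From mathcomp Require Import all_classical all_reals all_analysis.
From mathcomp Require Import ring lra measurable_realfun.
Import Order.TTheory GRing.Theory Num.Theory.
Import numFieldNormedType.Exports.
Local Open Scope classical_set_scope.
Local Open Scope ring_scope.

Section RealFacts.
Context {R : realType}.
Implicit Types x y t u b : R.

Definition phi x : R := x * ln x.
Definition kf b : R := (b + 2^-1) * ln (b + 2^-1) - (b - 2^-1) * ln (b - 2^-1).

Lemma ln_le_sub1 x : 0 < x -> ln x <= x - 1.
Proof.
move=> x0; have h := @le_ln1Dx R (x - 1) ltac:(lra).
have e : 1 + (x - 1) = x by lra.
by rewrite e in h.
Qed.

Lemma tangent t u : 0 < t -> 0 <= u -> phi t + (ln t + 1) * (u - t) <= phi u.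
Proof.
move=> t0; rewrite le_eqVlt => /orP[/eqP<-|u0].
  by rewrite /phi mul0r; nra.
have h := ln_le_sub1 (t / u) (divr_gt0 t0 u0).
rewrite ln_div ?posrE // in h.
have e : u * (t / u) = t by rewrite mulrCA divff ?mulr1 // gt_eqF.
rewrite /phi; nra.
Qed.

Lemma phi_ge x : 0 <= x -> x - 1 <= phi x.
Proof. by move=> x0; have := tangent 1 x ltr01 x0; rewrite /phi ln1; lra. Qed.

Definition Df x : R := phi (x + 1) - phi x.

Lemma Df_ge0 x : 0 <= x -> 0 <= Df x.
Proof.
rewrite /Df /phi le_eqVlt => /orP[/eqP<-|x0].
  by rewrite mul0r add0r ln1 mulr0 subr0.
have l1 : ln x <= ln (x + 1) by rewrite ler_ln ?posrE; lra.
have l2 : 0 <= ln (x + 1) by apply: ln_ge0; lra.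
nra.
Qed.

Lemma Df_step x y : 0 <= x -> x <= y -> y <= x + 1 -> Df x <= Df y.
Proof.
rewrite le_eqVlt => /orP[/eqP<- xy _|x0 xy yx1].
  have -> : Df 0 = 0 by rewrite /Df /phi mul0r add0r ln1 mulr0 subr0.
  by apply: Df_ge0; lra.
have h1 := tangent (x + 1) (y + 1) ltac:(lra) ltac:(lra).
have h2 := tangent (y) (x) ltac:(lra) ltac:(lra).
have l : ln y <= ln (x + 1) by rewrite ler_ln ?posrE; lra.
rewrite /Df; nra.
Qed.

Lemma Df_mono_n (n : nat) x y : 0 <= x -> x <= y -> y <= x + n%:R -> Df x <= Df y.
Proof.
elim: n x y => [|n IH] x y x0 xy yxn.
  by have -> : y = x by rewrite addr0 in yxn; lra.
have [yx1|yx1] := leP y (x + 1); first exact: Df_step.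
apply: (@le_trans _ _ (Df (y - 1))).
  apply: IH => //; first lra. by rewrite -addn1 natrD in yxn; lra.
by apply: Df_step; lra.
Qed.

Lemma Df_mono x y : 0 <= x -> x <= y -> Df x <= Df y.
Proof.
move=> x0 xy; apply: (Df_mono_n (Num.truncn (y - x)).+1) => //.
have := Num.Theory.truncnS_gt (y - x); lra.
Qed.

Lemma kf_Df b : 2^-1 <= b -> kf b = Df (b - 2^-1).
Proof. by move=> _; rewrite /kf /Df /phi; congr (_ * ln _ - _); lra. Qed.

Lemma kf_mono b b' : 2^-1 <= b -> b <= b' -> kf b <= kf b'.
Proof.
move=> hb hbb; rewrite !kf_Df; try lra.
apply: Df_mono; lra.
Qed.

Lemma kf_bound b : 0 <= b -> `|kf b| <= b + 1.
Proof.
move=> b0; have [hb|hb] := leP (2^-1) b.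
  rewrite kf_Df // ger0_norm; last by apply: Df_ge0; lra.
  have h := tangent (b + 2^-1) (b - 2^-1) ltac:(lra) ltac:(lra).
  have l := ln_le_sub1 (b + 2^-1) ltac:(lra).
  rewrite /Df /phi in h *.
  have -> : b - 2^-1 + 1 = b + 2^-1 by lra.
  nra.
rewrite /kf (ln0 (x := b - 2^-1)); last lra.
rewrite mulr0 subr0.
have h := phi_ge (b + 2^-1) ltac:(lra).
have l := ln_le0 (x := b + 2^-1) ltac:(lra).
rewrite /phi in h.
rewrite ler0_norm; last nra.
lra.
Qed.

End RealFacts.
Section MeasFacts.
Context {R : realType}.
Local Notation mu := (@leb3 R).

Lemma torusE : (torus : set (@pt R)) =
  ([set` `[- pi, pi]%R] `*` [set` `[- pi, pi]%R]) `*` [set` `[- pi, pi]%R].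
Proof. by apply/seteqP; split => p /=; rewrite /torus /=; [case=> ? [? ?]|case=> [[? ?] ?]]. Qed.

Lemma mtorus : measurable (torus : set (@pt R)).
Proof. by rewrite torusE; apply: measurableX => //; apply: measurableX. Qed.

Lemma torus_fin : (mu torus < +oo)%E.
Proof.
have mI : measurable ([set` `[- pi, pi]%R] : set R) by [].
rewrite torusE /leb3 product_measure1E //; last by apply: measurableX.
set x := (X in (X * _)%E).
have -> : x = (lebesgue_measure \x lebesgue_measure)%E (`[(- pi)%R, pi%R]%classic `*` `[(- pi)%R, pi%R]%classic) by [].
rewrite product_measure1E //.
have L := lebesgue_measure_itv (R:=R) `[- pi, pi].
rewrite /= in L.
change ((@lebesgue_measure R `[(- pi)%R, pi%R]%classic * @lebesgue_measure R `[(- pi)%R, pi%R]%classic) * @lebesgue_measure R `[(- pi)%R, pi%R]%classic < +oo)%E.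
rewrite L; case: ifP => _; rewrite ?mul0e ?mule0 ?ltry //=.
all: try by rewrite -!EFinM ltry.
Qed.

End MeasFacts.

Section MeasFacts2.
Context {R : realType}.
Local Notation mu := (@leb3 R).
Local Notation Int f := (mu.-integrable torus (EFin \o f)).

Lemma int_cst (k : R) : Int (cst k).
Proof.
apply/integrableP; split; first exact/measurable_EFinP/measurable_cst.
have -> : (fun x => `|(EFin \o cst k) x|%E) = cst (`|k|%:E) :> (pt -> \bar R).
  by [].
rewrite integral_cst; last exact: mtorus.
by apply: lte_mul_pinfty => //; exact: torus_fin.
Qed.

Lemma ae_torusP (P : @pt R -> Prop) : ae_torus P -> {ae mu, forall x, torus x -> P x}.
Proof.
move=> H; apply: negligibleS H => x /= /not_implyP [tx nP]; by split.
Qed.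

Lemma aeS {P Q : @pt R -> Prop} : {ae mu, forall x, torus x -> P x} ->
  (forall x, torus x -> P x -> Q x) -> {ae mu, forall x, torus x -> Q x}.
Proof.
move=> H PQ; apply: negligibleS H => x /= nQ tP; apply: nQ => tx.
exact: PQ tx (tP tx).
Qed.

Lemma aeS2 {P1 P2 Q : @pt R -> Prop} : {ae mu, forall x, torus x -> P1 x} ->
  {ae mu, forall x, torus x -> P2 x} ->
  (forall x, torus x -> P1 x -> P2 x -> Q x) -> {ae mu, forall x, torus x -> Q x}.
Proof.
move=> H1 H2 PQ; have := negligibleU H1 H2.
apply: negligibleS => x /= nQ; apply: contrapT => /not_orP [].
move=> /contrapT h1 /contrapT h2; apply: nQ => tx; exact: PQ tx (h1 tx) (h2 tx).
Qed.

Lemma ae_le_Rint (f h : @pt R -> R) : Int f -> Int h ->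
  {ae mu, forall x, torus x -> f x <= h x} ->
  Rintegral mu torus f <= Rintegral mu torus h.
Proof.
move=> If Ih H.
rewrite -subr_ge0 -RintegralB //; last exact: mtorus.
rewrite /Rintegral; apply: fine_ge0.
have mf : measurable_fun torus f by apply/measurable_EFinP; exact: measurable_int If.
have mh : measurable_fun torus h by apply/measurable_EFinP; exact: measurable_int Ih.
rewrite (@ae_eq_integral _ _ _ mu torus (fun x => (Num.max (h x - f x) 0)%:E)) //.
  by apply: integral_ge0 => x _; rewrite lee_fin le_max lexx orbT.
- exact: mtorus.
- by apply/measurable_EFinP; exact: measurable_funB mh mf.
- by apply/measurable_EFinP; apply: measurable_maxr => //; exact: measurable_funB mh mf.
- by apply: (aeS H) => x tx hx; rewrite max_l // subr_ge0.
Qed.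

Lemma ae_integrable (f h : @pt R -> R) : measurable_fun torus f -> Int h ->
  {ae mu, forall x, torus x -> `|f x| <= `|h x|} -> Int f.
Proof.
move=> mf Ih H; apply/integrableP; split; first exact/measurable_EFinP.
have /integrableP[mh hoo] := Ih.
apply: le_lt_trans hoo.
apply: ae_ge0_le_integral => //.
- exact: mtorus.
- by apply: measurableT_comp => //; exact/measurable_EFinP.
- by apply: measurableT_comp => //.
Qed.

End MeasFacts2.

Section MeasFacts3.
Context {R : realType}.
Local Notation mu := (@leb3 R).
Local Notation Int f := (mu.-integrable torus (EFin \o f)).
Local Notation Rint f := (Rintegral mu torus f).

Lemma Int_lin (k1 k2 : R) (f : @pt R -> R) : Int f -> Int (fun p => k1 * f p + k2).
Proof.
move=> If.
have h := integrableD (mu:=mu) mtorus (integrableZl (mu:=mu) mtorus k1 If) (int_cst k2).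
apply: (eq_integrable (mu:=mu) mtorus _ _ _ h) => x _ /=; by rewrite -EFinM -EFinD.
Qed.

Lemma Rint_lin (k1 k2 : R) (f : @pt R -> R) : Int f ->
  Rint (fun p => k1 * f p + k2) = k1 * Rint f + k2 * fine (mu torus).
Proof.
move=> If.
have I1 : Int (fun p => k1 * f p).
  apply: (eq_integrable (mu:=mu) mtorus _ _ _ (Int_lin k1 0 f If)).
  by move=> x _ /=; rewrite addr0.
rewrite (RintegralD (mu:=mu) (f1 := fun p => k1 * f p) (f2 := cst k2)) //; last 2 first.
  exact: mtorus. exact: int_cst.
rewrite (RintegralZl (mu:=mu)) //; last exact: mtorus.
by rewrite (Rintegral_cst mu) //; exact: mtorus.
Qed.

Lemma Int_opp (f : @pt R -> R) : Int f -> Int (fun p => - f p).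
Proof.
move=> If; apply: (eq_integrable (mu:=mu) mtorus _ _ _ (Int_lin (-1) 0 f If)) => x _ /=.
by rewrite addr0 mulN1r.
Qed.

Lemma Rint_opp (f : @pt R -> R) : Int f -> Rint (fun p => - f p) = - Rint f.
Proof.
move=> If; have := Rint_lin (-1) 0 f If; rewrite mul0r addr0 mulN1r => <-.
by apply: eq_Rintegral => x _; rewrite addr0 mulN1r.
Qed.

Lemma Rint0 : Rint (fun _ : @pt R => 0) = 0.
Proof. by rewrite (Rintegral_cst mu) ?mul0r //; exact: mtorus. Qed.

Lemma ae_torusE (P : @pt R -> Prop) : ae_torus P <-> {ae mu, forall x, torus x -> P x}.
Proof.
split; first exact: ae_torusP.
move=> H; apply: negligibleS H => x [tx nP] /= h; exact: nP (h tx).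
Qed.

End MeasFacts3.

Section Entropy.
Context {R : realType}.
Local Notation mu := (@leb3 R).
Local Notation Int f := (mu.-integrable torus (EFin \o f)).
Local Notation Rint f := (Rintegral mu torus f).

Lemma mkf : measurable_fun setT (@kf R).
Proof.
rewrite /kf; apply: measurable_funB; apply: measurable_funM.
- by apply: measurable_funD.
- by apply: measurableT_comp; [exact: measurable_ln | apply: measurable_funD].
- by apply: measurable_funB.
- by apply: measurableT_comp; [exact: measurable_ln | apply: measurable_funB].
Qed.

Lemma mbeta (g a : @pt R -> R) : measurable_fun torus g -> measurable_fun torus a ->
  measurable_fun torus (betaf g a).
Proof.
move=> mg ma; rewrite /betaf.
apply: measurableT_comp; first exact: (continuous_measurable_fun (@sqrt_continuous R)).
apply: measurable_funB; apply: measurable_funX => //.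
by apply: measurable_funD.
Qed.

Lemma ment (g a : @pt R -> R) : measurable_fun torus g -> measurable_fun torus a ->
  measurable_fun torus (fun p => kf (betaf g a p)).
Proof. by move=> mg ma; apply: measurableT_comp; [exact: mkf | exact: mbeta _ _ mg ma]. Qed.

Lemma beta_bound (g a : @pt R -> R) p : 0 <= betaf g a p <= 2^-1 + `|g p|.
Proof.
rewrite /betaf sqrtr_ge0 /=.
have h : (2^-1 + g p) ^+ 2 - a p ^+ 2 <= (2^-1 + g p) ^+ 2.
  by rewrite lerBlDr lerDl sqr_ge0.
apply: le_trans (ler_wsqrtr h) _.
rewrite sqrtr_sqr; apply: le_trans (ler_normD _ _) _.
by rewrite ger0_norm.
Qed.

Lemma Int_ent (g a : @pt R -> R) : measurable_fun torus g -> Int g ->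
  measurable_fun torus a -> Int (fun p => kf (betaf g a p)).
Proof.
move=> mg Ig ma.
have In : Int (fun p => `|g p|) by exact: integrable_norm Ig.
apply: (ae_integrable _ _ (ment _ _ mg ma) (Int_lin 1 (3/2) _ In)).
apply: aeW => p _.
have /andP[b0 b1] := beta_bound g a p.

apply: le_trans (kf_bound _ b0) _.
rewrite mul1r ger0_norm; first lra.
have := normr_ge0 (g p); lra.
Qed.

Lemma entropyE (g a : @pt R -> R) : entropy g a = tint (fun p => kf (betaf g a p)).
Proof. by []. Qed.

Lemma ent_opp (g a : @pt R -> R) : entropy g (fun p => - a p) = entropy g a.
Proof.
rewrite !entropyE; congr tint; apply: boolp.funext => p.
by rewrite /betaf sqrrN.
Qed.

Lemma ent_zero (g a : @pt R -> R) (rho : R) : domD g a rho ->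
  entropy g a <= entropy g (fun _ => 0).
Proof.
case=> [[mg Ig] ma g0 ga rho0].
rewrite !entropyE /tint; apply: ler_wpM2l.
  by rewrite invr_ge0 exprn_ge0 // mulr_ge0 // pi_ge0.
apply: ae_le_Rint; [exact: Int_ent | exact: Int_ent | ].
apply: (aeS2 (ae_torusP _ g0) (ae_torusP _ ga)) => p _ hg ha.
apply: kf_mono.
  rewrite /betaf.
  have e : 2^-1 = Num.sqrt ((2^-1 : R) ^+ 2) by rewrite sqrtr_sqr ger0_norm.
  rewrite {1}e; apply: ler_wsqrtr; nra.
rewrite /betaf; apply: ler_wsqrtr; nra.
Qed.

End Entropy.

Section Main.
Context {R : realType}.
Local Notation mu := (@leb3 R).
Local Notation Int f := (mu.-integrable torus (EFin \o f)).
Local Notation Rint f := (Rintegral mu torus f).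

Lemma dom_rho (g a : @pt R -> R) rho rho' : domD g a rho -> 0 <= rho' -> domD g a rho'.
Proof. by case=> ? ? ? ? _ r; split. Qed.

Lemma dom_opp (g a : @pt R -> R) rho rho' : domD g a rho -> 0 <= rho' ->
  domD g (fun p => - a p) rho'.
Proof.
case=> [mgI ma g0 ga _] r; split => //.
- exact: measurable_funN.
- by apply: negligibleS ga => p [tp nh]; split => //; rewrite sqrrN in nh.
Qed.

Lemma dom_zero (g a : @pt R -> R) rho : domD g a rho -> domD g (fun _ => 0) 0.
Proof.
case=> [mgI ma g0 ga _]; split => //; try exact: measurable_cst.
apply: negligibleS g0 => p [tp nh]; split => // hg; apply: nh.
by rewrite expr0n /=; apply: mulr_ge0 => //; lra.
Qed.

Lemma c0_gt0 : 0 < ((2 * pi) ^+ 3)^-1 :> R.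
Proof. by rewrite invr_gt0 exprn_gt0 // mulr_gt0 // pi_gt0. Qed.

Lemma tint_opp (g a : @pt R -> R) rho : domD g a rho -> tint (fun p => - a p) = - tint a.
Proof.
case=> [[mg Ig] ma g0 ga _].
have Ia : Int a.
  apply: (ae_integrable _ _ ma (Int_lin 1 (2^-1) _ Ig)).
  apply: (aeS2 (ae_torusP _ g0) (ae_torusP _ ga)) => p _ hg ha.
  rewrite mul1r (ger0_norm (x := g p + 2^-1)); last lra.
  rewrite -ler_sqr ?nnegrE //; last lra.
  by rewrite real_normK ?num_real //; nra.
by rewrite /tint Rint_opp // mulrN.
Qed.

Lemma Int_a (g a : @pt R -> R) rho : domD g a rho -> Int a.
Proof.
case=> [[mg Ig] ma g0 ga _].
apply: (ae_integrable _ _ ma (Int_lin 1 (2^-1) _ Ig)).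
apply: (aeS2 (ae_torusP _ g0) (ae_torusP _ ga)) => p _ hg ha.
rewrite mul1r (ger0_norm (x := g p + 2^-1)); last lra.
rewrite -ler_sqr ?nnegrE //; last lra.
by rewrite real_normK ?num_real //; nra.
Qed.

Lemma tint0 : tint (fun _ : @pt R => 0) = 0.
Proof. by rewrite /tint Rint0 mulr0. Qed.

Lemma G_ge0 (g a : @pt R -> R) rho : domD g a rho -> 0 <= tint g.
Proof.
case=> [[mg Ig] ma g0 ga _].
apply: mulr_ge0; first exact: ltW c0_gt0.
rewrite -(@Rint0 R); apply: ae_le_Rint => //; first exact: int_cst.
by apply: (aeS (ae_torusP _ g0)).
Qed.

Lemma L1normE (g a : @pt R -> R) rho : domD g a rho -> L1norm g = tint g.
Proof.
case=> [[mg Ig] ma g0 ga _].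
rewrite /L1norm /tint; congr (_ * _).
have In : Int (fun p => `|g p|) by exact: integrable_norm Ig.
apply/eqP; rewrite eq_le; apply/andP; split; apply: ae_le_Rint => //.
- by apply: (aeS (ae_torusP _ g0)) => p _ h; rewrite ger0_norm.
- by apply: (aeS (ae_torusP _ g0)) => p _ h; rewrite ger0_norm.
Qed.

Lemma a_zero (g a : @pt R -> R) rho : domD g a rho -> tint g = 0 -> tint a = 0.
Proof.
move=> D; have Ia := Int_a _ _ _ D; move: D.
case=> [[mg Ig] ma g0 ga _] G0.
have G0' : Rint g = 0.
  move: G0; rewrite /tint => /eqP; rewrite mulf_eq0 => /orP[|/eqP//].
  by rewrite gt_eqF // c0_gt0.
set M := fine (mu torus).
have M0 : 0 <= M by apply: fine_ge0; exact: measure_ge0.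
have key : forall e : R, 0 < e -> `|Rint a| <= e / 2 * M.
  move=> e e0.
  have Iu := Int_lin ((2 * e)^-1 + e / 2) (e / 2) _ Ig.
  have bound : {ae mu, forall x, torus x ->
      `|a x| <= ((2 * e)^-1 + e / 2) * g x + e / 2}.
    apply: (aeS2 (ae_torusP _ g0) (ae_torusP _ ga)) => p _ hg ha.
    set x := g p / e.
    have xe : x * e = g p by rewrite /x mulrVK // unitfE gt_eqF.
    have x0 : 0 <= x by rewrite /x divr_ge0 // ltW.
    have -> : ((2 * e)^-1 + e / 2) * g p + e / 2 = (x + e * (1 + g p)) / 2.
      rewrite -xe; field; rewrite gt_eqF //.
    rewrite -ler_sqr ?nnegrE //; last by apply: divr_ge0 => //; nra.
    rewrite real_normK ?num_real //.
    have E0 : (x + e * (1 + g p)) ^+ 2 - 4 * (x * (e * (1 + g p))) = (x - e * (1 + g p)) ^+ 2 by ring.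
    have E1 : ((x + e * (1 + g p)) / 2) ^+ 2 = (x + e * (1 + g p)) ^+ 2 / 4 by field.
    have E2 : x * (e * (1 + g p)) = g p * (1 + g p) by rewrite mulrA xe.
    rewrite E2 in E0; rewrite E1.
    have := sqr_ge0 (x - e * (1 + g p)).
    move: E0 ha; set S := (x + e * (1 + g p)) ^+ 2; set Q := (x - e * (1 + g p)) ^+ 2.
    set P := g p * (1 + g p); set A2 := a p ^+ 2; lra.
  have h1 := ae_le_Rint _ _ Ia Iu (aeS bound (fun p _ h => le_trans (ler_norm _) h)).
  have h2 := ae_le_Rint _ _ (Int_opp _ Ia) Iu (aeS bound (fun p _ h => le_trans (ltac:(by rewrite -normrN; exact: ler_norm) : - a p <= `|a p|) h)).
  rewrite Rint_lin // G0' mulr0 add0r in h1 h2.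
  rewrite Rint_opp // in h2.
  by rewrite /M ler_norml; apply/andP; split; lra.
have : `|Rint a| = 0.
  apply/eqP; apply: contraT => hne.
  have r0 : 0 < `|Rint a| by rewrite lt_neqAle eq_sym hne normr_ge0.
  have ep0 : 0 < `|Rint a| / (M + 1) by apply: divr_gt0 => //; lra.
  have := key _ ep0.
  set r := `|Rint a|.
  have e1 : r / (M + 1) * (M + 1) = r by rewrite mulrVK // unitfE gt_eqF //; lra.
  move: e1 ep0; set q := r / (M + 1) => e1 ep0 hq.
  have : q / 2 * M * 2 = q * M by field.
  nra.
by move/normr0_eq0; rewrite /tint => ->; rewrite mulr0.
Qed.

End Main.

Section Arith.
Context {R : realType}.
Variables (U T mu : R).

Definition Fq (X S A G r : R) : R :=
  X - mu * r - T * S + U / 2 * A ^+ 2 + U * G ^+ 2 + U * r * A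
  + 2 * U * r * G + U / 2 * r ^+ 2.

Lemma freeFE (g a : @pt R -> R) rho :
  freeF U T mu g a rho = Fq (tint (fun p => (disp p - mu) * g p)) (entropy g a) (tint a) (tint g) rho.
Proof. by []. Qed.

Lemma FqE X S A G r : Fq X S A G r =
  (X - T * S + U * G ^+ 2) + U / 2 * (A + r) ^+ 2 + r * (2 * U * G - mu).
Proof. rewrite /Fq; by field. Qed.

Lemma FqE0 X S G : Fq X S 0 G 0 = X - T * S + U * G ^+ 2.
Proof. rewrite /Fq; by field. Qed.

Lemma Fq1 X S A G t : mu = t * U + G * (2 * U) ->
  Fq X S A G (t - A) = Fq X S A G 0 - U / 2 * (t - A) ^+ 2.
Proof. by move=> hm; rewrite /Fq hm; field. Qed.

Lemma Fq2 X S A G t : mu = t * U + G * (2 * U) ->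
  Fq X S (- A) G (A + t) = Fq X S A G 0 - U / 2 * (A + t) ^+ 2.
Proof. by move=> hm; rewrite /Fq hm; field. Qed.

End Arith.

Section Arith2.
Context {R : realType}.

Lemma ar1a (U T mu X S A G : R) : 0 < U ->
  (forall r, 0 <= r -> Fq U T mu X S A G 0 <= Fq U T mu X S A G r) ->
  (forall r, 0 <= r -> Fq U T mu X S A G 0 <= Fq U T mu X S (- A) G r) ->
  mu <= G * (2 * U).
Proof.
move=> hU H1 H2; rewrite leNgt; apply/negP => hc.
set t := (mu - G * (2 * U)) / U.
have t0 : 0 < t by apply: divr_gt0 => //; lra.
have tU : mu = t * U + G * (2 * U) by rewrite /t mulrVK ?unitfE ?gt_eqF //; lra.
case: (leP A 0) => hA.
- have := H1 (t - A) ltac:(lra).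
  rewrite (Fq1 _ _ _ _ _ _ _ _ tU).
  have : 0 < U / 2 * (t - A) ^+ 2.
    by apply: mulr_gt0; [apply: divr_gt0 | apply: exprn_gt0; lra].
  lra.
- have := H2 (A + t) ltac:(lra).
  rewrite (Fq2 _ _ _ _ _ _ _ _ tU).
  have : 0 < U / 2 * (A + t) ^+ 2.
    by apply: mulr_gt0; [apply: divr_gt0 | apply: exprn_gt0; lra].
  lra.
Qed.

Lemma ar1b (U T mu X S S0 A G r : R) : 0 < U -> 0 < r -> T * S <= T * S0 ->
  Fq U T mu X S A G r <= Fq U T mu X S0 0 G 0 -> G * (2 * U) <= mu.
Proof.
move=> hU r0 TS; rewrite FqE0 FqE => H.
rewrite leNgt; apply/negP => hc.
have : 0 <= U / 2 * (A + r) ^+ 2 by apply: mulr_ge0; [apply: divr_ge0; lra | exact: sqr_ge0].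
have : 0 < r * (2 * U * G - mu) by apply: mulr_gt0 => //; lra.
lra.
Qed.

Lemma ar2 (U T mu X S S0 A G r : R) : 0 < U -> 0 < r -> mu <= 0 -> 0 <= G ->
  T * S <= T * S0 ->
  Fq U T mu X S A G r <= Fq U T mu X S0 0 G 0 -> G = 0 /\ A <> 0.
Proof.
move=> hU r0 mu0 G0 TS; rewrite FqE0 FqE => H.
have P1 : 0 <= U / 2 * (A + r) ^+ 2 by apply: mulr_ge0; [apply: divr_ge0; lra | exact: sqr_ge0].
have UG : 0 <= U * G by apply: mulr_ge0 => //; lra.
have c0 : 0 <= 2 * U * G - mu by lra.
have P2 : 0 <= r * (2 * U * G - mu) by apply: mulr_ge0 => //; lra.
have c1 : 2 * U * G - mu = 0.
  apply/eqP; rewrite eq_le c0 andbT.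
  by rewrite -(pmulr_rle0 _ r0); lra.
have hG : G = 0.
  have : U * G = 0 by lra.
  by move/eqP; rewrite mulf_eq0 gt_eqF //= => /eqP.
split => // hA; rewrite hA add0r in P1 H.
have : 0 < U / 2 * r ^+ 2 by apply: mulr_gt0; [apply: divr_gt0 | apply: exprn_gt0].
lra.
Qed.

End Arith2.

Theorem corollary4p2 (R : realType) (U T : R) (hU : 0 < U) (hT : 0 <= T) :
  (forall (mu : R), 0 <= mu ->
     forall (g a : pt -> R) (rho : R), minimizer U T mu g a rho ->
       (rho = 0 -> mu / (2 * U) <= L1norm g) /\
       (0 < rho -> L1norm g <= mu / (2 * U))) /\
  (forall (mu : R), mu <= 0 ->
     forall (g a : pt -> R) (rho : R), minimizer U T mu g a rho -> ~ (0 < rho)).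
Proof.
split.
- move=> mu mu0 g a rho [D Hmin].
  rewrite (L1normE _ _ _ D).
  have TS : T * entropy g a <= T * entropy g (fun _ => 0).
    by apply: ler_wpM2l => //; exact: ent_zero D.
  split.
  + move=> r0; subst rho.
    rewrite ler_pdivrMr; last by rewrite mulr_gt0.
    apply: (@ar1a R U T mu (tint (fun p => (disp p - mu) * g p)) (entropy g a) (tint a) (tint g) hU).
    * by move=> r r0; exact: Hmin g a r (dom_rho _ _ _ _ D r0).
    * move=> r r0; have := Hmin g (fun p => - a p) r (dom_opp _ _ _ _ D r0).
      by rewrite !freeFE ent_opp (tint_opp _ _ _ D).
  + move=> rpos; rewrite ler_pdivlMr; last by rewrite mulr_gt0.
    have := Hmin g (fun _ => 0) 0 (dom_zero _ _ _ D).
    rewrite !freeFE tint0 => H.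
    exact: (ar1b _ _ _ _ _ _ _ _ _ hU rpos TS H).
- move=> mu mu0 g a rho [D Hmin] rpos.
  have G0 := G_ge0 _ _ _ D.
  have TS : T * entropy g a <= T * entropy g (fun _ => 0).
    by apply: ler_wpM2l => //; exact: ent_zero D.
  have := Hmin g (fun _ => 0) 0 (dom_zero _ _ _ D).
  rewrite !freeFE tint0 => H.
  have [hG hA] := ar2 _ _ _ _ _ _ _ _ _ hU rpos mu0 G0 TS H.
  exact: hA (a_zero _ _ _ D hG).
Qed.
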